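(* Assume each $f_i$ has degree $d_i\ge1$. Suppose $\lambda>0$ and $v=(v_1,\ldots,v_n,v_{n+1})\in K_1^\circ$ satisfy $\lambda v_{n+1}=-1$ (i.e., $\Delta\tilde y=\lambda[v]_1$ satisfies $\langle x_{n+1},\Delta\tilde y\rangle=-1$ and $\Delta\tilde y\in\mathscr R_1(K_1^\circ)$). If the point $(0,v)$ lies in the closure of $\widetilde K_1\cap\{x_0>0\}$, then the problem $\min x_{n+1}$ over $K_1$ and the problem $\min_{x\in K}\max_i f_i(x)$ are both unbounded below, and hence there are no weakly Pareto points.
   Context: $f_1,\ldots,f_m,c_i$ ($i\in\mathcal E\cup\mathcal I$) are real polynomials in $x\in\mathbb R^n$, $K=\{x: c_i(x)=0\ (i\in\mathcal E),\ c_j(x)\ge0\ (j\in\mathcal I)\}$, $d_i=\deg f_i$. For a polynomial $p$ of degree $e$ in $x$, $\tilde p(x_0,x)=x_0^ep(x/x_0)$ and $p^{hom}(x)=\tilde p(0,x)$; $\tilde x=(x_0,x)$. Define $K_1=\{(x,x_{n+1})\in\mathbb R^{n+1}: -(-x_{n+1})^{d_i}-f_i(x)\ge0\ (i\in[m]),\ x\in K\}$, $\widetilde K_1=\{(x_0,x,x_{n+1}): -(-x_{n+1})^{d_i}-\tilde f_i(\tilde x)\ge0\ (i\in[m]),\ \tilde c_i(\tilde x)=0\ (i\in\mathcal E),\ \tilde c_j(\tilde x)\ge0\ (j\in\mathcal I),\ \|\tilde x\|^2+x_{n+1}^2=1,\ x_0\ge0\}$, and $K_1^\circ=\{(x,x_{n+1}):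 -(-x_{n+1})^{d_i}-f_i^{hom}(x)\ge0\ (i\in[m]),\ c_i^{hom}(x)=0\ (i\in\mathcal E),\ c_j^{hom}(x)\ge0\ (j\in\mathcal I),\ \|x\|^2+x_{n+1}^2=1\}$. $[v]_1=(1,v)$, $\mathscr R_1(T)$ is the set of degree-1 moment vectors of Borel measures supported in $T$. A point $x^*\in K$ is weakly Pareto if no $x\in K$ has $f_i(x)<f_i(x^* )$ for all $i$. *)

(* Defs.v *)
From HB Require Import structures.
From mathcomp Require Import all_boot all_order all_algebra.
From mathcomp Require Import reals.
From mathcomp Require Import mpoly.
Import Order.TTheory GRing.Theory Num.Theory.

Set Implicit Arguments.
Unset Strict Implicit.
Unset Printing Implicit Defensive.

Local Open Scope ring_scope.

Section PolyOpt.
Variables (R : realType) (n : nat).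

(* total degree of p (degree of 0 is 0 by convention) *)
Definition pdeg (p : {mpoly R[n]}) : nat := (msize p).-1.

(* p^hom : the homogeneous part of p of top degree, p^hom(x) = ~p(0,x) *)
Definition phom (p : {mpoly R[n]}) : {mpoly R[n]} :=
  \sum_(m <- msupp p | mdeg m == pdeg p) p@_m *: 'X_[m].

(* ~p(x0,x) = x0^e p(x/x0), e = deg p; variable 0 is x0, variable lift 0 i is x_i *)
Definition ptilde (p : {mpoly R[n]}) : {mpoly R[n.+1]} :=
  \sum_(m <- msupp p) p@_m *:
     ('X_ord0 ^+ (pdeg p - mdeg m) * \prod_(i < n) 'X_(lift ord0 i) ^+ m i).

Definition ext (x0 : R) (x : 'I_n -> R) : 'I_n.+1 -> R :=
  fun j => match unlift ord0 j with Some i => x i | None => x0 end.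

Definition sqnorm (x : 'I_n -> R) : R := \sum_(i < n) x i ^+ 2.

Variables (m pe pi : nat) (f : 'I_m -> {mpoly R[n]})
  (ce : 'I_pe -> {mpoly R[n]}) (ci : 'I_pi -> {mpoly R[n]}).

Definition inK (x : 'I_n -> R) : Prop :=
  (forall i, (ce i).@[x] = 0) /\ (forall j, 0 <= (ci j).@[x]).

(* K_1 in R^{n+1}, points (x, x_{n+1}) *)
Definition inK1 (x : 'I_n -> R) (t : R) : Prop :=
  (forall i, 0 <= - (- t) ^+ pdeg (f i) - (f i).@[x]) /\ inK x.

(* ~K_1 in R^{n+2}, points (x0, x, x_{n+1}) *)
Definition inK1tilde (x0 : R) (x : 'I_n -> R) (t : R) : Prop :=
  [/\ forall i, 0 <= - (- t) ^+ pdeg (f i) - (ptilde (f i)).@[ext x0 x],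
      forall i, (ptilde (ce i)).@[ext x0 x] = 0,
      forall j, 0 <= (ptilde (ci j)).@[ext x0 x],
      x0 ^+ 2 + sqnorm x + t ^+ 2 = 1
    & 0 <= x0].

Definition inK1circ (x : 'I_n -> R) (t : R) : Prop :=
  [/\ forall i, 0 <= - (- t) ^+ pdeg (f i) - (phom (f i)).@[x],
      forall i, (phom (ce i)).@[x] = 0,
      forall j, 0 <= (phom (ci j)).@[x]
    & sqnorm x + t ^+ 2 = 1].

Definition in_closure_K1tilde_pos (x0 : R) (x : 'I_n -> R) (t : R) : Prop :=
  forall e : R, 0 < e -> exists y0 (y : 'I_n -> R) s,
    [/\ inK1tilde y0 y s, 0 < y0 &
        (y0 - x0) ^+ 2 + sqnorm (fun i => y i - x i) + (s - t) ^+ 2 < e].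

Definition weakly_pareto (xs : 'I_n -> R) : Prop :=
  inK xs /\ ~ (exists x, inK x /\ forall i, (f i).@[x] < (f i).@[xs]).

End PolyOpt.

(* Main.v *)
Require Import Defs.
From HB Require Import structures.
From mathcomp Require Import all_boot all_order all_algebra.
From mathcomp Require Import reals.
From mathcomp Require Import mpoly.
From mathcomp Require Import lra.
Import Order.TTheory GRing.Theory Num.Theory.
Local Open Scope ring_scope.
Lemma ptildeE (R : realType) n (p : {mpoly R[n]}) y0 (y : 'I_n -> R) :
  y0 != 0 ->
  (ptilde p).@[ext y0 y] = y0 ^+ pdeg p * p.@[fun i => y i / y0].
Proof.
move=> hy0.
rewrite /ptilde raddf_sum /= (mevalE _ p) mulr_sumr.
apply: eq_big_seq => mm hm.
rewrite mevalZ mevalM rmorph_prod /= rmorphXn /= mevalXU.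
under eq_bigr do rewrite rmorphXn /= mevalXU.
have e0 : ext y0 y ord0 = y0 by rewrite /ext unlift_none.
have e1 i : ext y0 y (lift ord0 i) = y i by rewrite /ext liftK.
rewrite e0; under eq_bigr do rewrite e1.
under [in RHS]eq_bigr do rewrite exprMn.
rewrite big_split /= prodrXr -mdegE.
have hle : (mdeg mm <= pdeg p)%N.
  by have := msize_mdeg_lt hm; rewrite /pdeg; case: (msize p).
rewrite -{2}(subnK hle) exprD exprVn.
have hd : y0 ^+ mdeg mm != 0 by rewrite expf_neq0.
move: (y0 ^+ (pdeg p - mdeg mm)) (y0 ^+ mdeg mm) hd (\prod_(i<n) y i ^+ mm i) (p@_mm) => A D hD P c.
rewrite mulrCA -mulrA; congr (A * _).
by rewrite mulrCA [D * _]mulrCA divff // mulr1.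
Qed.

Lemma toK1 (R : realType) (n m pe pi : nat)
  (f : 'I_m -> {mpoly R[n]}) (ce : 'I_pe -> {mpoly R[n]})
  (ci : 'I_pi -> {mpoly R[n]}) (y0 : R) (y : 'I_n -> R) (s : R) :
  0 < y0 -> inK1tilde f ce ci y0 y s ->
  inK1 f ce ci (fun i => y i / y0) (s / y0).
Proof.
move=> hy [h1 h2 h3 _ _].
have hy0 : y0 != 0 by rewrite gt_eqF.
split; [|split].
- move=> i; have := h1 i; rewrite ptildeE //.
  move: (pdeg (f i)) (f i).@[_] => d F.
  have hD : 0 < y0 ^+ d by rewrite exprn_gt0.
  have -> : - (- s) ^+ d - y0 ^+ d * F = (- (- (s / y0)) ^+ d - F) * y0 ^+ d.
    rewrite -[- (s / y0)]mulNr exprMn exprVn mulrBl mulNr -mulrA mulVf ?gt_eqF // mulr1.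
    by rewrite [F * _]mulrC.
  by rewrite pmulr_lge0.
- move=> i; have := h2 i; rewrite ptildeE // => /eqP.
  by rewrite mulf_eq0 expf_eq0 (negbTE hy0) andbF /= => /eqP.
- move=> j; have := h3 j; rewrite ptildeE //.
  by rewrite pmulr_rge0 // exprn_gt0.
Qed.

Lemma sqnorm_ge0 {R : realType} {n} (x : 'I_n -> R) : 0 <= sqnorm x.
Proof. by apply: sumr_ge0 => i _; rewrite sqr_ge0. Qed.

Lemma unbK1 (R : realType) (n m pe pi : nat)
  (f : 'I_m -> {mpoly R[n]}) (ce : 'I_pe -> {mpoly R[n]})
  (ci : 'I_pi -> {mpoly R[n]}) (v : 'I_n -> R) (vt : R)
  (hvt : vt < 0)
  (hcl : in_closure_K1tilde_pos f ce ci 0 v vt) (B : R) :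
  0 < B -> exists x t, inK1 f ce ci x t /\ t < - B.
Proof.
move=> hB.
set a := - vt. have ha : 0 < a by rewrite oppr_gt0.
set c := a / (2 * B). have hc : 0 < c by rewrite divr_gt0 // mulr_gt0.
have hac : a = 2 * B * c by rewrite /c mulrC divfK // gt_eqF // mulr_gt0.
have he : 0 < Num.min (a ^+ 2 / 4) (c ^+ 2).
  by rewrite lt_min divr_gt0 ?exprn_gt0.
have [y0 [y [s [hK hy0 hd]]]] := hcl _ he.
exists (fun i => y i / y0), (s / y0); split; first exact: toK1.
have hn := sqnorm_ge0 (fun i => y i - v i).
move: hd; rewrite subr0 => hd.
have hm1 : Num.min (a ^+ 2 / 4) (c ^+ 2) <= a ^+ 2 / 4 by rewrite ge_min lexx.
have hm2 : Num.min (a ^+ 2 / 4) (c ^+ 2) <= c ^+ 2 by rewrite ge_min lexx orbT.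
have h1 : (s - vt) ^+ 2 < a ^+ 2 / 4.
  apply: le_lt_trans (lt_le_trans hd hm1).
  by move: (sqr_ge0 y0) hn; lra.
have h2 : y0 ^+ 2 < c ^+ 2.
  apply: le_lt_trans (lt_le_trans hd hm2).
  by move: (sqr_ge0 (s - vt)) hn; lra.
have hs : s < - a / 2.
  rewrite /a in h1 *. nra.
have hyc : y0 < c by nra.
rewrite ltr_pdivrMr //.
rewrite hac in hs. nra.
Qed.


Theorem theorem7p3 (R : realType) (n m pe pi : nat)
  (f : 'I_m -> {mpoly R[n]}) (ce : 'I_pe -> {mpoly R[n]})
  (ci : 'I_pi -> {mpoly R[n]})
  (hdeg : forall i, (1 <= pdeg (f i))%N)
  (lam : R) (v : 'I_n -> R) (vt : R)
  (hlam : 0 < lam)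
  (hv : inK1circ f ce ci v vt)
  (hlv : lam * vt = -1)
  (hcl : in_closure_K1tilde_pos f ce ci 0 v vt) :
  [/\ (forall M : R, exists (x : 'I_n -> R) (t : R), inK1 f ce ci x t /\ t < M),
      (forall M : R, exists x : 'I_n -> R,
          inK ce ci x /\ forall i, (f i).@[x] < M)
    & forall xs : 'I_n -> R, ~ weakly_pareto f ce ci xs].
Proof.
have hvt : vt < 0.
  have : lam * vt < 0 by rewrite hlv ltrN10.
  by rewrite pmulr_rlt0.
have P2 : forall M : R, exists x : 'I_n -> R,
          inK ce ci x /\ forall i, (f i).@[x] < M.
  move=> M.
  have hB : 0 < `|M| + 1 by rewrite ltr_wpDl.
  have [x [t [[hf hK] ht]]] := @unbK1 _ _ _ _ _ f ce ci v vt hvt hcl _ hB.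
  exists x; split => // i.
  have hM : - `|M| <= M by rewrite lerNl -normrN ler_norm.
  have hN := normr_ge0 M.
  have ht1 : 1 <= - t by lra.
  have hx := ler_eXnr (hdeg i) ht1.
  have := hf i; rewrite subr_ge0 => hfi.
  move: (f i).@[x] ((- t) ^+ pdeg (f i)) hfi hx => F T hfi hx.
  lra.
split => //.
- move=> M.
  have hB : 0 < `|M| + 1 by rewrite ltr_wpDl.
  have [x [t [hK ht]]] := @unbK1 _ _ _ _ _ f ce ci v vt hvt hcl _ hB.
  exists x, t; split => //.
  have hM : - `|M| <= M by rewrite lerNl -normrN ler_norm.
  have hN := normr_ge0 M.
  lra.
- move=> xs [hKs hnot]; apply: hnot.
  have [x [hK hx]] := P2 (- \sum_i `|(f i).@[xs]|).
  exists x; split => // i.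
  apply: lt_le_trans (hx i) _.
  have h1 : `|(f i).@[xs]| <= \sum_i `|(f i).@[xs]|.
    rewrite (bigD1 i) //= lerDl; exact: sumr_ge0.
  have h2 : - `|(f i).@[xs]| <= (f i).@[xs] by rewrite lerNl -normrN ler_norm.
  move: (\sum_i `|(f i).@[xs]|) `|(f i).@[xs]| ((f i).@[xs]) h1 h2 => S A F h1 h2.
  lra.
Qed.
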